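(* A triple $(A_1,A_2,A_3)\in V_3$ is similar to an upper triangular $3$-matrix if and only if $\sigma_{12}=\sigma_{13}=\sigma_{23}=\Delta_{123}=0$.
   Context: $V_3=(M_{2\times2}(\mathbb{C}))^{\times 3}$ with $GL(2,\mathbb{C})$ acting by simultaneous conjugation; similar means same orbit; upper triangular $3$-matrix means all components upper triangular. With $t_j=\mathsf{tr}(A_j)$, $t_{jk}=\mathsf{tr}(A_jA_k)$, $t_{jkl}=\mathsf{tr}(A_jA_kA_l)$, define $\tau_{jk}=t_{jk}-\tfrac12t_jt_k$, $\sigma_{jk}=\tau_{jk}^2-\tau_{jj}\tau_{kk}$ and $\Delta_{jkl}=(t_{jkl}-t_{lkj})^2$. *)

(* Defs.v *)
From HB Require Import structures.
From mathcomp Require Import all_boot all_order all_algebra.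
From mathcomp Require Import complex.
From mathcomp Require Import reals.
Set Implicit Arguments. Unset Strict Implicit. Unset Printing Implicit Defensive.
Import Order.TTheory GRing.Theory Num.Theory.
Local Open Scope ring_scope.

Section V3.
Variable F : fieldType.

Definition upper_tri (A : 'M[F]_2) : Prop :=
  forall i j : 'I_2, (j < i)%N -> A i j = 0.

Definition similar_to_upper_tri (A1 A2 A3 : 'M[F]_2) : Prop :=
  exists P : 'M[F]_2, P \in unitmx /\
    [/\ upper_tri (P *m A1 *m invmx P),
        upper_tri (P *m A2 *m invmx P) &
        upper_tri (P *m A3 *m invmx P)].

Definition tau (X Y : 'M[F]_2) : F :=
  \tr (X *m Y) - 2^-1 * (\tr X * \tr Y).

Definition sigma (X Y : 'M[F]_2) : F :=
  tau X Y ^+ 2 - tau X X * tau Y Y.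

Definition Delta (X Y Z : 'M[F]_2) : F :=
  (\tr (X *m Y *m Z) - \tr (Z *m Y *m X)) ^+ 2.
End V3.

(* Main.v *)
Require Import Defs.
From HB Require Import structures.
From mathcomp Require Import all_boot all_order all_algebra.
From mathcomp Require Import complex.
From mathcomp Require Import reals.
From mathcomp Require Import ring.
Import Order.TTheory GRing.Theory Num.Theory.
Local Open Scope ring_scope.

Section H.
Variable C : numClosedFieldType.
Notation i0 := (@ord0 1).
Notation i1 := (@ord_max 1).

Lemma ord2P (i : 'I_2) : i = i0 \/ i = i1.
Proof. case: i => [m Hi]; case: m Hi => [|[|m]] Hi //; [left|right]; exact/val_inj. Qed.

Lemma tr2 (A : 'M[C]_2) : \tr A = A i0 i0 + A i1 i1.
Proof. rewrite /mxtrace big_ord_recl big_ord1; congr (_ + A _ _); exact/val_inj. Qed.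

Lemma mul2 (A B : 'M[C]_2) i j : (A *m B) i j = A i i0 * B i0 j + A i i1 * B i1 j.
Proof. rewrite mxE big_ord_recl big_ord1; congr (_ + A _ _ * B _ _); exact/val_inj. Qed.

Lemma two_neq0 : (2:C) != 0. Proof. by rewrite pnatr_eq0. Qed.

Definition qa (A : 'M[C]_2) := A i1 i0.
Definition qb (A : 'M[C]_2) := A i1 i1 - A i0 i0.
Definition qc (A : 'M[C]_2) := - A i0 i1.
Definition qe (A : 'M[C]_2) x y := qa A * x ^+ 2 + qb A * (x * y) + qc A * y ^+ 2.

Lemma sigma_fact (A1 A2 : 'M[C]_2) x1 y1 x2 y2 :
  A1 i1 i0 = y1 * y2 -> A1 i0 i1 = - (x1 * x2) ->
  A1 i1 i1 = A1 i0 i0 - (y1 * x2 + x1 * y2) ->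
  sigma A1 A2 = qe A2 x1 y1 * qe A2 x2 y2.
Proof.
move=> h1 h2 h3; rewrite /sigma /tau /qe /qa /qb /qc !tr2 !mul2 h1 h2 h3.
by field.
Qed.

Lemma Delta_det (A1 A2 A3 : 'M[C]_2) :
  \tr (A1 *m A2 *m A3) - \tr (A3 *m A2 *m A1) =
  (qb A1 * qc A2 - qc A1 * qb A2) * qa A3 + (qc A1 * qa A2 - qa A1 * qc A2) * qb A3
  + (qa A1 * qb A2 - qb A1 * qa A2) * qc A3.
Proof. rewrite /qa /qb /qc !tr2 !mul2; ring. Qed.

Lemma factor2 (a b c : C) : exists x1 y1 x2 y2,
  ((x1 != 0) || (y1 != 0)) /\ a = y1 * y2 /\ c = x1 * x2 /\ b = - (y1 * x2 + x1 * y2).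
Proof.
have [->|a0] := eqVneq a 0.
  exists (-1), 0, (-c), b; split; first by rewrite oppr_eq0 oner_eq0.
  by split; [rewrite mul0r | split; ring].
pose s := sqrtC (b ^+ 2 - 4 * a * c).
have hs : s ^+ 2 = b ^+ 2 - 4 * a * c by rewrite sqrtCK.
pose x1 := (- b + s) / (2 * a).
exists x1, 1, (- b - a * x1), a; split; first by rewrite oner_eq0 orbT.
split; first by rewrite mul1r.
split; last by ring.
have h2 := two_neq0.
have E : x1 * (- b - a * x1) = c + (b ^+ 2 - 4 * a * c - s ^+ 2) / (4 * a).
  by rewrite /x1; field.
by rewrite E hs subrr mul0r addr0.
Qed.

Lemma root_fact (A : 'M[C]_2) : exists x1 y1 x2 y2,
  ((x1 != 0) || (y1 != 0)) /\
  [/\ A i1 i0 = y1 * y2, A i0 i1 = - (x1 * x2) &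
      A i1 i1 = A i0 i0 - (y1 * x2 + x1 * y2)] /\
  qe A x1 y1 = 0 /\ qe A x2 y2 = 0.
Proof.
have [x1 [y1 [x2 [y2 [nz [ha [hc hb]]]]]]] := factor2 (qa A) (qb A) (qc A).
exists x1, y1, x2, y2; split => //.
rewrite /qe ha hb hc; split; last by split; ring.
move: ha hb hc; rewrite /qa /qb /qc => -> hb hc; split => //.
  by rewrite -hc opprK.
by rewrite -hb; ring.
Qed.

Lemma common2 (A1 A2 : 'M[C]_2) : sigma A1 A2 = 0 ->
  exists x y, ((x != 0) || (y != 0)) /\ qe A1 x y = 0 /\ qe A2 x y = 0.
Proof.
move=> s0.
have [x1 [y1 [x2 [y2 [nz [[h1 h2 h3] [r1 r2]]]]]]] := root_fact A1.
move: s0; rewrite (sigma_fact A1 A2 _ _ _ _ h1 h2 h3) => /eqP; rewrite mulf_eq0 => /orP [/eqP e|/eqP e].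
  by exists x1, y1.
have [nz2|z2] := boolP ((x2 != 0) || (y2 != 0)).
  by exists x2, y2.
move: z2; rewrite negb_or !negbK => /andP [/eqP ex /eqP ey].
have [u1 [v1 [u2 [v2 [nz' [_ [r1' _]]]]]]] := root_fact A2.
exists u1, v1; split => //; split => //.
rewrite /qe /qa /qb /qc h1 h2 h3 ex ey; ring.
Qed.

Lemma par3 (w0 w1 w2 m0 m1 m2 u0 u1 u2 : C) :
  [|| w0 != 0, w1 != 0 | w2 != 0] ->
  w0 * m1 = w1 * m0 -> w0 * m2 = w2 * m0 -> w1 * m2 = w2 * m1 ->
  w0 * u0 + w1 * u1 + w2 * u2 = 0 -> m0 * u0 + m1 * u1 + m2 * u2 = 0.
Proof.
move=> nz e01 e02 e12 wu.
case/or3P: nz => nz; apply/eqP; rewrite -(mulIr_eq0 _ (mulIf nz)) mulrC; apply/eqP.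
- have -> : w0 * (m0 * u0 + m1 * u1 + m2 * u2) =
    m0 * (w0 * u0 + w1 * u1 + w2 * u2) + u1 * (w0 * m1 - w1 * m0) + u2 * (w0 * m2 - w2 * m0) by ring.
  by rewrite wu e01 e02 !subrr !mulr0 !addr0.
- have -> : w1 * (m0 * u0 + m1 * u1 + m2 * u2) =
    m1 * (w0 * u0 + w1 * u1 + w2 * u2) - u0 * (w0 * m1 - w1 * m0) + u2 * (w1 * m2 - w2 * m1) by ring.
  by rewrite wu e01 e12 !subrr !mulr0 subr0 !addr0.
- have -> : w2 * (m0 * u0 + m1 * u1 + m2 * u2) =
    m2 * (w0 * u0 + w1 * u1 + w2 * u2) - u0 * (w0 * m2 - w2 * m0) - u1 * (w1 * m2 - w2 * m1) by ring.
  by rewrite wu e02 e12 !subrr !mulr0 !subr0.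
Qed.

Lemma common3 (A1 A2 A3 : 'M[C]_2) :
  sigma A1 A2 = 0 -> sigma A1 A3 = 0 -> sigma A2 A3 = 0 -> Delta A1 A2 A3 = 0 ->
  exists x y, ((x != 0) || (y != 0)) /\
    [/\ qe A1 x y = 0, qe A2 x y = 0 & qe A3 x y = 0].
Proof.
move=> s12 s13 s23 d0.
have D0 : \tr (A1 *m A2 *m A3) - \tr (A3 *m A2 *m A1) = 0.
  by apply/eqP; rewrite -sqrf_eq0; apply/eqP.
rewrite Delta_det in D0.
have [v1nz|v1z] := boolP [|| qa A1 != 0, qb A1 != 0 | qc A1 != 0]; last first.
  move: v1z; rewrite !negb_or !negbK => /and3P [/eqP ea /eqP eb /eqP ec].
  have [x [y [nz [e2 e3]]]] := common2 A2 A3 s23.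
  exists x, y; split => //; split => //.
  by rewrite /qe ea eb ec; ring.
pose w0 := qb A1 * qc A2 - qc A1 * qb A2.
pose w1 := qc A1 * qa A2 - qa A1 * qc A2.
pose w2 := qa A1 * qb A2 - qb A1 * qa A2.
have [wnz|wz] := boolP [|| w0 != 0, w1 != 0 | w2 != 0].
  have [x [y [nz [e1 e2]]]] := common2 A1 A2 s12.
  exists x, y; split => //; split => //.
  have := @par3 w0 w1 w2 (x ^+ 2) (x * y) (y ^+ 2) (qa A3) (qb A3) (qc A3) wnz.
  have E1 : w0 * (x * y) = w1 * x ^+ 2.
    apply/eqP; rewrite -subr_eq0; apply/eqP.
    transitivity (qc A2 * qe A1 x y - qc A1 * qe A2 x y); first by rewrite /qe /w0 /w1; ring.
    by rewrite e1 e2 !mulr0 subrr.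
  have E2 : w0 * y ^+ 2 = w2 * x ^+ 2.
    apply/eqP; rewrite -subr_eq0; apply/eqP.
    transitivity (qb A1 * qe A2 x y - qb A2 * qe A1 x y); first by rewrite /qe /w0 /w2; ring.
    by rewrite e1 e2 !mulr0 subrr.
  have E3 : w1 * y ^+ 2 = w2 * (x * y).
    apply/eqP; rewrite -subr_eq0; apply/eqP.
    transitivity (qa A2 * qe A1 x y - qa A1 * qe A2 x y); first by rewrite /qe /w1 /w2; ring.
    by rewrite e1 e2 !mulr0 subrr.
  move=> /(_ E1 E2 E3 D0) h; rewrite /qe -h; ring.
move: wz; rewrite !negb_or !negbK /w0 /w1 /w2 => /and3P [/eqP f0 /eqP f1 /eqP f2].
have [x [y [nz [e1 e3]]]] := common2 A1 A3 s13.
exists x, y; split => //; split => //.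
have := @par3 (qa A1) (qb A1) (qc A1) (qa A2) (qb A2) (qc A2) (x ^+ 2) (x * y) (y ^+ 2) v1nz.
apply.
- by apply/eqP; rewrite -subr_eq0 f2.
- by apply/eqP; rewrite -subr_eq0 -oppr_eq0 opprB f1.
- by apply/eqP; rewrite -subr_eq0 f0.
- exact: e1.
Qed.

Definition mk2 (a b c d : C) : 'M[C]_2 :=
  \matrix_(i < 2, j < 2) if i == i0 then (if j == i0 then a else b)
                          else (if j == i0 then c else d).

Lemma mk2E a b c d :
  [/\ mk2 a b c d i0 i0 = a, mk2 a b c d i0 i1 = b,
      mk2 a b c d i1 i0 = c & mk2 a b c d i1 i1 = d].
Proof. by rewrite !mxE. Qed.

Lemma id2E : [/\ (1%:M : 'M[C]_2) i0 i0 = 1, (1%:M : 'M[C]_2) i0 i1 = 0,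
      (1%:M : 'M[C]_2) i1 i0 = 0 & (1%:M : 'M[C]_2) i1 i1 = 1].
Proof. by rewrite !mxE. Qed.

Lemma eig (A : 'M[C]_2) x y : (x != 0) || (y != 0) -> qe A x y = 0 ->
  exists lam, A i0 i0 * x + A i0 i1 * y = lam * x /\
              A i1 i0 * x + A i1 i1 * y = lam * y.
Proof.
move=> nz e.
have [x0|xnz] := eqVneq x 0.
  move: nz; rewrite x0 eqxx /= => ynz.
  have a01 : A i0 i1 = 0.
    have E : qe A x y = - (A i0 i1 * y ^+ 2) by rewrite /qe /qa /qb /qc x0; ring.
    move: e; rewrite E => /eqP; rewrite oppr_eq0 mulf_eq0 expf_eq0 /=.
    by rewrite (negbTE ynz) orbF => /eqP.
  exists (A i1 i1); rewrite a01; split; ring.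
exists (A i0 i0 + A i0 i1 * y / x); split; first by field.
apply/eqP; rewrite -subr_eq0; apply/eqP.
transitivity (qe A x y / x); last by rewrite e mul0r.
by rewrite /qe /qa /qb /qc; field.
Qed.

Lemma tri_of_root x y : (x != 0) || (y != 0) ->
  exists Q : 'M[C]_2, Q \in unitmx /\
    forall A, qe A x y = 0 -> upper_tri (invmx Q *m A *m Q).
Proof.
move=> nz.
pose e0 : C := if x != 0 then 0 else 1.
pose e1 : C := if x != 0 then 1 else 0.
have dnz : x * e1 - y * e0 != 0.
  rewrite /e0 /e1; case: ifP => hx; first by rewrite mulr1 mulr0 subr0.
  move: nz; rewrite hx /= => ynz.
  by rewrite mulr0 mulr1 sub0r oppr_eq0.
set d := x * e1 - y * e0 in dnz.
pose Q := mk2 x e0 y e1.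
pose Q' := mk2 (e1 / d) (- e0 / d) (- y / d) (x / d).
have QQ : Q *m Q' = 1%:M.
  have [q1 q2 q3 q4] := mk2E x e0 y e1.
  have [p1 p2 p3 p4] := mk2E (e1 / d) (- e0 / d) (- y / d) (x / d).
  have [i1' i2' i3' i4'] := id2E.
  apply/matrixP => i j; rewrite mul2.
  case: (ord2P i) => ->; case: (ord2P j) => ->;
    rewrite ?q1 ?q2 ?q3 ?q4 ?p1 ?p2 ?p3 ?p4 ?i1' ?i2' ?i3' ?i4' /d; field => //.
have [Qu _] := mulmx1_unit QQ.
exists Q; split => // A eA.
have [lam [h1 h2]] := eig A x y nz eA.
have [q1 q2 q3 q4] := mk2E x e0 y e1.
have PQ : (invmx Q *m Q) i1 i0 = 0 by rewrite mulVmx // mxE.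
rewrite mul2 q1 q3 in PQ.
move=> i j; case: (ord2P i) => ->; case: (ord2P j) => -> //= _.
rewrite -mulmxA mul2 !mul2 q1 q3 h1 h2.
transitivity (lam * (invmx Q i1 i0 * x + invmx Q i1 i1 * y)); first by ring.
by rewrite PQ mulr0.
Qed.

Definition cj (P X : 'M[C]_2) := P *m X *m invmx P.

Lemma trcj P X : P \in unitmx -> \tr (cj P X) = \tr X.
Proof. by move=> Pu; rewrite /cj mxtrace_mulC mulmxA mulVmx // mul1mx. Qed.

Lemma cjM P X Y : P \in unitmx -> cj P X *m cj P Y = cj P (X *m Y).
Proof.
move=> Pu; rewrite /cj !mulmxA; congr (_ *m _).
by rewrite -(mulmxA _ (invmx P)) mulVmx // mulmx1.
Qed.

Lemma sigma_cj P X Y : P \in unitmx -> sigma (cj P X) (cj P Y) = sigma X Y.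
Proof. by move=> Pu; rewrite /sigma /tau !cjM // !trcj. Qed.

Lemma Delta_cj P X Y Z : P \in unitmx -> Delta (cj P X) (cj P Y) (cj P Z) = Delta X Y Z.
Proof. by move=> Pu; rewrite /Delta !cjM // !trcj. Qed.

Lemma sigma_ut (U V : 'M[C]_2) : U i1 i0 = 0 -> V i1 i0 = 0 -> sigma U V = 0.
Proof. by move=> hu hv; rewrite /sigma /tau !tr2 !mul2 hu hv; field. Qed.

Lemma Delta_ut (U V W : 'M[C]_2) : U i1 i0 = 0 -> V i1 i0 = 0 -> W i1 i0 = 0 ->
  Delta U V W = 0.
Proof. by move=> hu hv hw; rewrite /Delta !tr2 !mul2 hu hv hw; ring. Qed.
End H.

Theorem corollary2p11 (R : realType) (A1 A2 A3 : 'M[R[i]]_2) :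
  similar_to_upper_tri A1 A2 A3 <->
  [/\ sigma A1 A2 = 0, sigma A1 A3 = 0, sigma A2 A3 = 0 & Delta A1 A2 A3 = 0].
Proof.
split.
  move=> [P [Pu [u1 u2 u3]]].
  have t1 := u1 ord_max ord0 erefl; have t2 := u2 ord_max ord0 erefl.
  have t3 := u3 ord_max ord0 erefl.
  rewrite -(@sigma_cj _ P A1 A2 Pu) -(@sigma_cj _ P A1 A3 Pu) -(@sigma_cj _ P A2 A3 Pu).
  rewrite -(@Delta_cj _ P A1 A2 A3 Pu).
  split; [exact: sigma_ut | exact: sigma_ut | exact: sigma_ut | exact: Delta_ut].
move=> [s12 s13 s23 d0].
have [x [y [nz [e1 e2 e3]]]] := @common3 _ A1 A2 A3 s12 s13 s23 d0.
have [Q [Qu HQ]] := @tri_of_root _ x y nz.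
exists (invmx Q); split; first by rewrite unitmx_inv.
by rewrite invmxK; split; apply: HQ.
Qed.
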